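(* Let $\gamma>0$, $s>0$, $D_2=\partial/\partial v$, and $G(u,v;s)=(u^2+v^2)^{-s}$ for $(u,v)\in\mathbb{R}^2\setminus\{(0,0)\}$. If $u\ge\gamma$ and $v\in\mathbb{R}$, then $$\frac{|D_2G(u,v;s)|}{G(u,v;s)}\le\frac{s}{\gamma},\qquad -\frac{2s}{\gamma^2}\le\frac{D_2^2G(u,v;s)}{G(u,v;s)}\le\frac{2s(2s+1)}{4\gamma^2},$$ $$\frac{|D_2^3G(u,v;s)|}{G(u,v;s)}\le\frac{2s(2s+2)}{\gamma^3}\max\Big\{\frac{25\sqrt5}{72},\frac{2s+1}{8}\Big\},$$ $$-\frac{2s(s+1)(2s+2)\cdot3}{\gamma^4}\le\frac{D_2^4G(u,v;s)}{G(u,v;s)}\le\frac{2s(2s+1)(2s+2)(2s+3)}{\gamma^4}.$$ *)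

(* Defs.v *)
From Stdlib Require Import Reals.
From Coquelicot Require Import Coquelicot.
Open Scope R_scope.

Definition G (u v s : R) : R := Rpower (u ^ 2 + v ^ 2) (- s).

Definition D2n (k : nat) (u v s : R) : R := Derive_n (fun w => G u w s) k v.

(* Main.v *)
Require Import Defs.
From Stdlib Require Import Reals Lra Psatz.
From Coquelicot Require Import Coquelicot.
Open Scope R_scope.

Definition f1 u s w := -2*s*w * G u w s / (u^2+w^2).
Definition f2 u s w := (-2*s*(u^2+w^2) + 4*s*(s+1)*w^2) * G u w s / (u^2+w^2)^2.
Definition f3 u s w := (12*s*(s+1)*w*(u^2+w^2) - 8*s*(s+1)*(s+2)*w^3) * G u w s / (u^2+w^2)^3.
Definition f4 u s w := (12*s*(s+1)*(u^2+w^2)^2 - 48*s*(s+1)*(s+2)*w^2*(u^2+w^2)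
   + 16*s*(s+1)*(s+2)*(s+3)*w^4) * G u w s / (u^2+w^2)^4.

Ltac dtac u w :=
  assert (0 < u^2+w^2) by nra;
  assert (0 < u * (u * 1) + w * (w * 1)) by nra;
  auto_derive; [ repeat split; try apply Rgt_not_eq; repeat apply Rmult_lt_0_compat; lra | ];
  repeat match goal with |- context [?a * (?a * 1) + ?b * (?b * 1)] =>
    replace (a*(a*1)+b*(b*1)) with (a^2+b^2) by ring end;
  match goal with |- context [exp (?e)] =>
   let h := fresh in set (h := exp e) end; simpl; field; lra.

Lemma d0 u s w : 0 < u -> is_derive (fun w => G u w s) w (f1 u s w).
Proof. intros hu. unfold f1, G, Rpower. dtac u w. Qed.
Lemma d1 u s w : 0 < u -> is_derive (f1 u s) w (f2 u s w).
Proof. intros hu. unfold f1, f2, G, Rpower. dtac u w. Qed.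
Lemma d2 u s w : 0 < u -> is_derive (f2 u s) w (f3 u s w).
Proof. intros hu. unfold f2, f3, G, Rpower. dtac u w. Qed.
Lemma d3 u s w : 0 < u -> is_derive (f3 u s) w (f4 u s w).
Proof. intros hu. unfold f3, f4, G, Rpower. dtac u w. Qed.

Lemma n1 u s w : 0 < u -> D2n 1 u w s = f1 u s w.
Proof. intros hu. unfold D2n. simpl. apply is_derive_unique. apply d0; auto. Qed.
Lemma n2 u s w : 0 < u -> D2n 2 u w s = f2 u s w.
Proof. intros hu. unfold D2n. change (Derive (Derive_n (fun w => G u w s) 1) w = f2 u s w).
 rewrite (Derive_ext (Derive_n (fun w => G u w s) 1) (f1 u s) w (fun x => n1 u s x hu)).
 apply is_derive_unique. apply d1; auto. Qed.
Lemma n3 u s w : 0 < u -> D2n 3 u w s = f3 u s w.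
Proof. intros hu. unfold D2n. change (Derive (Derive_n (fun w => G u w s) 2) w = f3 u s w).
 rewrite (Derive_ext (Derive_n (fun w => G u w s) 2) (f2 u s) w (fun x => n2 u s x hu)).
 apply is_derive_unique. apply d2; auto. Qed.
Lemma n4 u s w : 0 < u -> D2n 4 u w s = f4 u s w.
Proof. intros hu. unfold D2n. change (Derive (Derive_n (fun w => G u w s) 3) w = f4 u s w).
 rewrite (Derive_ext (Derive_n (fun w => G u w s) 3) (f3 u s) w (fun x => n3 u s x hu)).
 apply is_derive_unique. apply d3; auto. Qed.

Lemma divle a b c d : 0 < b -> 0 < d -> a * d <= c * b -> a / b <= c / d.
Proof. intros. apply (Rmult_le_reg_r (b*d)); [nra|].
 replace (a/b*(b*d)) with (a*d) by (field; lra).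
 replace (c/d*(b*d)) with (c*b) by (field; lra). lra. Qed.

Lemma pA z : 0 <= z -> z*(3 - z^2) <= 0.77*(1+z^2)^3.
Proof. intros. assert (h1:=pow2_ge_0 (z-0.43)). assert (h2:=pow2_ge_0 (z^2-0.18)).
 assert (h3:=pow2_ge_0 (z*(z-0.43))). nra. Qed.
Lemma pB t : 0 <= t <= 1 -> 0 <= (1-t)^2*(20*t^2-12*t)+3.
Proof. intros. nra. Qed.
Lemma pC t : 0 <= t <= 1 -> 0 <= (1-t)^2*(24*t^2-24*t+3)+3.
Proof. intros. nra. Qed.

Lemma pAh u x : 0 < u -> 0 <= x -> x*u^3*(3*u^2-x^2) <= 0.77*(u^2+x^2)^3.
Proof. intros hu hx. assert (h := pA (x/u) ltac:(apply Rdiv_le_0_compat; lra)).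
 replace (x*u^3*(3*u^2-x^2)) with (u^6 * ((x/u)*(3-(x/u)^2))) by (field; lra).
 replace (0.77*(u^2+x^2)^3) with (u^6 * (0.77*(1+(x/u)^2)^3)) by (field; lra).
 apply Rmult_le_compat_l; [apply pow_le; lra | exact h]. Qed.

Lemma scale4 a y (P : R -> R) : 0 <= a -> 0 <= y -> 0 < a + y ->
  (forall t, 0 <= t <= 1 -> 0 <= P t) -> 0 <= (a+y)^4 * P (y/(a+y)).
Proof. intros. apply Rmult_le_pos. apply pow_le; lra. apply H2. split.
 apply Rdiv_le_0_compat; lra. unfold Rdiv; rewrite <- (Rinv_r (a+y)) by lra;
 apply Rmult_le_compat_r; [left; apply Rinv_0_lt_compat; lra | lra]. Qed.

Lemma L4 a y s : 0 <= a -> 0 <= y -> 0 < a + y -> 0 <= s ->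
  0 <= a^2 * (3*(a+y)^2 - 12*(s+2)*y*(a+y) + 4*(s+2)*(s+3)*y^2) + 3*(s+1)*(a+y)^4.
Proof. intros ha hy hr hs.
 assert (HB := scale4 a y (fun t => (1-t)^2*(20*t^2-12*t)+3) ha hy hr pB).
 assert (HC := scale4 a y (fun t => (1-t)^2*(24*t^2-24*t+3)+3) ha hy hr pC).
 cbv beta in HB, HC.
 replace ((a + y) ^ 4 * ((1 - y / (a + y)) ^ 2 * (20 * (y / (a + y)) ^ 2 - 12 * (y / (a + y))) + 3))
   with (a^2*(20*y^2-12*y*(a+y)) + 3*(a+y)^4) in HB by (field; lra).
 replace ((a + y) ^ 4 * ((1 - y / (a + y)) ^ 2 * (24 * (y / (a + y)) ^ 2 - 24 * (y / (a + y)) + 3) + 3))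
   with (a^2*(24*y^2-24*y*(a+y)+3*(a+y)^2) + 3*(a+y)^4) in HC by (field; lra).
 replace (a^2 * (3*(a+y)^2 - 12*(s+2)*y*(a+y) + 4*(s+2)*(s+3)*y^2) + 3*(s+1)*(a+y)^4)
  with (4*y^2*a^2*s^2 + (a^2*(20*y^2-12*y*(a+y)) + 3*(a+y)^4)*s
        + (a^2*(24*y^2-24*y*(a+y)+3*(a+y)^2) + 3*(a+y)^4)) by ring.
 assert (0 <= 4*y^2*a^2*s^2) by (replace (4*y^2*a^2*s^2) with (4*(y*a*s)^2) by ring; assert (h:=pow2_ge_0 (y*a*s)); lra).
 assert (0 <= (a^2*(20*y^2-12*y*(a+y)) + 3*(a+y)^4)*s) by (apply Rmult_le_pos; lra).
 lra. Qed.

Lemma sqrt5 : 2.236 <= sqrt 5.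
Proof. assert (h := sqrt_sqrt 5 ltac:(lra)). assert (h2 := sqrt_pos 5). nra. Qed.

Lemma L3 g s u x : 0 < g -> 0 < s -> g <= u -> 0 <= x ->
  Rabs (x*(3*u^2-(2*s+1)*x^2)) * g^3 <= Rmax (25*sqrt 5/72) ((2*s+1)/8) * (u^2+x^2)^3.
Proof. intros hg hs hu hx.
 assert (hg3 : g^3 <= u^3) by (apply pow_incr; lra).
 assert (hg0 : 0 <= g^3) by (apply pow_le; lra).
 assert (hr : 0 <= (u^2+x^2)^3) by (apply pow_le; nra).
 destruct (Rle_or_lt 0 (3*u^2-(2*s+1)*x^2)) as [hX|hX].
 - rewrite Rabs_pos_eq by (apply Rmult_le_pos; lra).
   assert (h5 := sqrt5).
   assert (hc : 0.77 <= 25*sqrt 5/72) by lra.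
   assert (hM := Rmax_l (25*sqrt 5/72) ((2*s+1)/8)).
   assert (h1 : x*(3*u^2-(2*s+1)*x^2)*g^3 <= x*(3*u^2-(2*s+1)*x^2)*u^3)
     by (apply Rmult_le_compat_l; [apply Rmult_le_pos|]; lra).
   assert (h2 : x*(3*u^2-(2*s+1)*x^2)*u^3 <= x*u^3*(3*u^2-x^2)).
   { replace (x*u^3*(3*u^2-x^2)) with (x*(3*u^2-x^2)*u^3) by ring.
     apply Rmult_le_compat_r; [apply pow_le; lra|]. apply Rmult_le_compat_l; [lra|].
     assert (0 <= x^2) by nra. nra. }
   assert (h3 := pAh u x ltac:(lra) hx).
   assert (h4 : 0.77*(u^2+x^2)^3 <= Rmax (25*sqrt 5/72) ((2*s+1)/8) * (u^2+x^2)^3)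
     by (apply Rmult_le_compat_r; lra).
   lra.
 - rewrite Rabs_left1 by (assert (0 <= x*((2*s+1)*x^2-3*u^2)) by (apply Rmult_le_pos; lra); nra).
   assert (hM := Rmax_r (25*sqrt 5/72) ((2*s+1)/8)).
   assert (h1 : - (x*(3*u^2-(2*s+1)*x^2))*g^3 <= - (x*(3*u^2-(2*s+1)*x^2))*u^3)
     by (apply Rmult_le_compat_l; [assert (0 <= x*((2*s+1)*x^2-3*u^2)) by (apply Rmult_le_pos; lra); nra|]; lra).
   assert (h2 : - (x*(3*u^2-(2*s+1)*x^2))*u^3 <= (2*s+1)/8 * (2*x*u)^3).
   { replace ((2*s+1)/8 * (2*x*u)^3) with (x*((2*s+1)*x^2)*u^3) by field.
     replace (- (x*(3*u^2-(2*s+1)*x^2))*u^3) with (x*((2*s+1)*x^2 - 3*u^2)*u^3) by ring.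
     apply Rmult_le_compat_r; [apply pow_le; lra|]. apply Rmult_le_compat_l; [lra|].
     assert (0 <= u^2) by nra. lra. }
   assert (h3 : (2*x*u)^3 <= (u^2+x^2)^3) by (apply pow_incr; split; [assert (0 <= x*u) by (apply Rmult_le_pos; lra); lra | assert (hh:=pow2_ge_0 (u-x)); nra]).
   assert (h4 : (2*s+1)/8 * (2*x*u)^3 <= (2*s+1)/8 * (u^2+x^2)^3)
     by (apply Rmult_le_compat_l; lra).
   assert (h6 : (2*s+1)/8 * (u^2+x^2)^3 <= Rmax (25*sqrt 5/72) ((2*s+1)/8) * (u^2+x^2)^3)
     by (apply Rmult_le_compat_r; lra).
   lra.
Qed.

Lemma K4lo g s u y : 0 < g -> 0 < s -> g <= u -> 0 <= y ->
  -(3*(s+1)*(u^2+y)^4) <= (3*(u^2+y)^2 - 12*(s+2)*y*(u^2+y) + 4*(s+2)*(s+3)*y^2) * g^4.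
Proof. intros hg hs hu hy.
 set (Q := 3*(u^2+y)^2 - 12*(s+2)*y*(u^2+y) + 4*(s+2)*(s+3)*y^2).
 assert (hr4 : 0 <= (u^2+y)^4) by (apply pow_le; nra).
 destruct (Rle_or_lt 0 Q) as [hQ|hQ].
 - assert (0 <= g^4) by (apply pow_le; lra). assert (0 <= Q*g^4) by (apply Rmult_le_pos; lra).
   assert (0 <= 3*(s+1)*(u^2+y)^4) by (apply Rmult_le_pos; lra). lra.
 - assert (hg4 : g^4 <= (u^2)^2) by (replace ((u^2)^2) with (u^4) by ring; apply pow_incr; lra).
   assert (h1 : Q * (u^2)^2 <= Q * g^4) by (apply Rmult_le_compat_neg_l; lra).
   assert (h2 := L4 (u^2) y s ltac:(nra) hy ltac:(nra) ltac:(lra)).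
   unfold Q in *. lra.
Qed.

Lemma K4hi g s u y : 0 < g -> 0 < s -> g <= u -> 0 <= y ->
  (3*(u^2+y)^2 - 12*(s+2)*y*(u^2+y) + 4*(s+2)*(s+3)*y^2) * g^4 <= (2*s+1)*(2*s+3)*(u^2+y)^4.
Proof. intros hg hs hu hy.
 set (Q := 3*(u^2+y)^2 - 12*(s+2)*y*(u^2+y) + 4*(s+2)*(s+3)*y^2).
 assert (hr4 : 0 <= (u^2+y)^4) by (apply pow_le; nra).
 assert (hK : 0 <= (2*s+1)*(2*s+3)*(u^2+y)^4) by (apply Rmult_le_pos; [nra|lra]).
 destruct (Rle_or_lt Q 0) as [hQ|hQ].
 - assert (0 <= g^4) by (apply pow_le; lra). assert (Q*g^4 <= 0) by (apply Rmult_le_0_r; lra). lra.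
 - assert (hg4 : g^4 <= (u^2)^2) by (replace ((u^2)^2) with (u^4) by ring; apply pow_incr; lra).
   assert (h1 : Q * g^4 <= Q * (u^2)^2) by (apply Rmult_le_compat_l; lra).
   assert (ha : (u^2)^2 <= (u^2+y)^2) by (apply pow_incr; nra).
   assert (h2 : Q * (u^2)^2 <= Q * (u^2+y)^2) by (apply Rmult_le_compat_l; lra).
   assert (h3 : (2*s+1)*(2*s+3)*(u^2+y)^2 - Q = (4*s^2+8*s)*u^2*(u^2+y) + 4*(s+2)*(s+3)*u^2*y)
     by (unfold Q; ring).
   assert (h4 : 0 <= (4*s^2+8*s)*u^2*(u^2+y)) by (repeat apply Rmult_le_pos; nra).
   assert (h5 : 0 <= 4*(s+2)*(s+3)*u^2*y) by (repeat apply Rmult_le_pos; nra).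
   assert (h6 : Q * (u^2+y)^2 <= (2*s+1)*(2*s+3)*(u^2+y)^2 * (u^2+y)^2)
     by (apply Rmult_le_compat_r; [apply pow_le; nra | lra]).
   replace ((u^2+y)^4) with ((u^2+y)^2 * (u^2+y)^2) by ring. lra.
Qed.

Theorem lemma5p7 (gamma s u v : R) :
  0 < gamma -> 0 < s -> gamma <= u ->
  Rabs (D2n 1 u v s) / G u v s <= s / gamma /\
  (- (2 * s) / gamma ^ 2 <= D2n 2 u v s / G u v s /\
   D2n 2 u v s / G u v s <= 2 * s * (2 * s + 1) / (4 * gamma ^ 2)) /\
  Rabs (D2n 3 u v s) / G u v s <=
    2 * s * (2 * s + 2) / gamma ^ 3 *
    Rmax (25 * sqrt 5 / 72) ((2 * s + 1) / 8) /\
  (- (2 * s * (s + 1) * (2 * s + 2) * 3) / gamma ^ 4 <= D2n 4 u v s / G u v s /\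
   D2n 4 u v s / G u v s <=
     2 * s * (2 * s + 1) * (2 * s + 2) * (2 * s + 3) / gamma ^ 4).
Proof.
 intros hg hs hu.
 assert (hu0 : 0 < u) by lra.
 rewrite (n1 u s v hu0), (n2 u s v hu0), (n3 u s v hu0), (n4 u s v hu0).
 assert (hE : 0 < G u v s) by (unfold G, Rpower; apply exp_pos).
 assert (hr : 0 < u^2+v^2) by nra.
 assert (hug : gamma^2 <= u^2) by (apply pow_incr; lra).
 assert (habs : forall x, Rabs x / G u v s = Rabs (x / G u v s)).
 { intros x. rewrite Rabs_div by lra. rewrite (Rabs_pos_eq (G u v s)) by lra. reflexivity. }
 rewrite !habs.
 replace (f1 u s v / G u v s) with (-2*s*v/(u^2+v^2)) by (unfold f1; field; lra).
 replace (f2 u s v / G u v s) with ((-2*s*(u^2+v^2) + 4*s*(s+1)*v^2)/(u^2+v^2)^2)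
   by (unfold f2; field; lra).
 replace (f3 u s v / G u v s) with (4*s*(s+1)*(v*(3*u^2-(2*s+1)*v^2))/(u^2+v^2)^3)
   by (unfold f3; field; lra).
 replace (f4 u s v / G u v s) with
   (4*s*(s+1)*(3*(u^2+v^2)^2 - 12*(s+2)*v^2*(u^2+v^2) + 4*(s+2)*(s+3)*(v^2)^2)/(u^2+v^2)^4)
   by (unfold f4; field; lra).
 assert (hg2 : 0 < gamma^2) by nra.
 assert (hr2 : 0 < (u^2+v^2)^2) by nra.
 split; [|split; [split|split; [|split]]].
 -
   apply Rabs_le. split.
   + replace (- (s/gamma)) with ((-s)/gamma) by (field; lra).
     apply divle; try lra.
     assert (0 <= s * ((v-gamma)^2 + (u^2-gamma^2))) by (apply Rmult_le_pos; [lra | assert (hh := pow2_ge_0 (v-gamma)); lra]). nra.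
   + apply divle; try lra.
     assert (0 <= s * ((v+gamma)^2 + (u^2-gamma^2))) by (apply Rmult_le_pos; [lra | assert (hh := pow2_ge_0 (v+gamma)); lra]). nra.
 -
   apply divle; try lra.
   assert (h1 : 0 <= 4*s*(s+1)*v^2*gamma^2) by (repeat (apply pow2_ge_0 || apply Rmult_le_pos); lra).
   assert (h2 : gamma^2 <= u^2+v^2) by nra.
   assert (h3 : 2*s*(u^2+v^2)*gamma^2 <= 2*s*(u^2+v^2)*(u^2+v^2))
     by (apply Rmult_le_compat_l; nra).
   nra.
 -
   apply divle; try lra.
   set (P := -2*s*(u^2+v^2) + 4*s*(s+1)*v^2).
   assert (hid : 2*s*(2*s+1)*(u^2+v^2)^2 - 4*u^2*P = 2*s*((2*s+1)*(u^2-v^2)^2 + 4*(u^2)^2))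
     by (unfold P; ring).
   assert (h1 : 0 <= 2*s*((2*s+1)*(u^2-v^2)^2 + 4*(u^2)^2))
     by (apply Rmult_le_pos; [lra|]; assert (0 <= (2*s+1)*(u^2-v^2)^2) by (apply Rmult_le_pos; [lra | apply pow2_ge_0]); assert (hh := pow2_ge_0 (u^2)); lra).
   destruct (Rle_or_lt P 0) as [hP|hP].
   + assert (0 <= 2*s*(2*s+1)*(u^2+v^2)^2) by (apply Rmult_le_pos; [nra | apply pow2_ge_0]).
     assert (P * (4*gamma^2) <= 0) by (apply Rmult_le_0_r; lra). lra.
   + assert (P * (4*gamma^2) <= P*(4*u^2)) by (apply Rmult_le_compat_l; lra). lra.
 -
   apply Rabs_le.
   assert (hL : Rabs (v*(3*u^2-(2*s+1)*v^2)) * gamma^3 <=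
                Rmax (25*sqrt 5/72) ((2*s+1)/8) * (u^2+v^2)^3).
   { replace (v*(3*u^2-(2*s+1)*v^2)) with
       ((if Rle_dec 0 v then 1 else -1) * (Rabs v*(3*u^2-(2*s+1)*Rabs v^2))).
     2:{ destruct (Rle_dec 0 v).
         - rewrite Rabs_pos_eq by lra. ring.
         - rewrite Rabs_left by lra. ring. }
     rewrite Rabs_mult.
     replace (u^2+v^2) with (u^2 + Rabs v ^2) by (rewrite pow2_abs; reflexivity).
     assert (Rabs (if Rle_dec 0 v then 1 else -1) = 1)
       by (destruct (Rle_dec 0 v); [apply Rabs_R1 | rewrite Rabs_left; lra]).
     rewrite H, Rmult_1_l. apply L3; auto. apply Rabs_pos. }
   set (X := v*(3*u^2-(2*s+1)*v^2)) in *.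
   set (M := Rmax (25*sqrt 5/72) ((2*s+1)/8)) in *.
   assert (hg3 : 0 < gamma^3) by (apply pow_lt; lra).
   assert (hr3 : 0 < (u^2+v^2)^3) by (apply pow_lt; lra).
   assert (hss : 0 < 4*s*(s+1)) by nra.
   replace (2*s*(2*s+2)/gamma^3*M) with ((4*s*(s+1)*M)/gamma^3) by (field; lra).
   destruct (proj1 (Rabs_le_between X (Rabs X)) (Rle_refl _)) as [hX1 hX2].
   assert (hA : 0 <= Rabs X) by apply Rabs_pos.
   split.
   + replace (- (4*s*(s+1)*M/gamma^3)) with ((-(4*s*(s+1)*M))/gamma^3) by (field; lra).
     apply divle; try lra.
     assert (h1 : -X*gamma^3 <= Rabs X * gamma^3) by (apply Rmult_le_compat_r; lra).
     assert (h2 : 4*s*(s+1)*(-X*gamma^3) <= 4*s*(s+1)*(M*(u^2+v^2)^3))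
       by (apply Rmult_le_compat_l; lra).
     nra.
   + apply divle; try lra.
     assert (h1 : X*gamma^3 <= Rabs X * gamma^3) by (apply Rmult_le_compat_r; lra).
     assert (h2 : 4*s*(s+1)*(X*gamma^3) <= 4*s*(s+1)*(M*(u^2+v^2)^3))
       by (apply Rmult_le_compat_l; lra).
     nra.
 -
   assert (hg4 : 0 < gamma^4) by (apply pow_lt; lra).
   assert (hr4 : 0 < (u^2+v^2)^4) by (apply pow_lt; lra).
   assert (hss : 0 < 4*s*(s+1)) by nra.
   assert (hy : 0 <= v^2) by nra.
   assert (hk := K4lo gamma s u (v^2) hg hs hu hy).
   set (Q := 3*(u^2+v^2)^2 - 12*(s+2)*v^2*(u^2+v^2) + 4*(s+2)*(s+3)*(v^2)^2) in *.
   apply divle; try lra.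
   assert (h2 : 4*s*(s+1)*(-(3*(s+1)*(u^2+v^2)^4)) <= 4*s*(s+1)*(Q*gamma^4))
     by (apply Rmult_le_compat_l; lra).
   nra.
 -
   assert (hg4 : 0 < gamma^4) by (apply pow_lt; lra).
   assert (hr4 : 0 < (u^2+v^2)^4) by (apply pow_lt; lra).
   assert (hss : 0 < 4*s*(s+1)) by nra.
   assert (hy : 0 <= v^2) by nra.
   assert (hk := K4hi gamma s u (v^2) hg hs hu hy).
   set (Q := 3*(u^2+v^2)^2 - 12*(s+2)*v^2*(u^2+v^2) + 4*(s+2)*(s+3)*(v^2)^2) in *.
   apply divle; try lra.
   assert (h2 : 4*s*(s+1)*(Q*gamma^4) <= 4*s*(s+1)*((2*s+1)*(2*s+3)*(u^2+v^2)^4))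
     by (apply Rmult_le_compat_l; lra).
   nra.
Qed.
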